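(* Let $n\ge 1$ be an integer. The game value of \textsc{Snort} played on the star $K_{1,n}$ with no tinted vertices is $\pm n = \{\, n \mid -n \,\}$.
   Context: \textsc{Snort} is a two-player normal-play combinatorial game (the player unable to move loses) between Left (blue) and Right (red), played on a finite simple graph in which each vertex may be tinted blue, tinted red, or untinted. Left may move on any vertex not tinted red; Right may move on any vertex not tinted blue. A move on vertex $v$ deletes $v$ and tints all neighbours of $v$ in the mover's colour; any vertex that thereby becomes tinted in both colours is deleted. Game values are in the standard sense of combinatorial game theory: $\{A \mid B\}$ denotes the game with Left options $A$ and Right options $B$, integers $n$ are the usual integer games, and $\pm G$ denotes $\{G \mid -G\}$. $K_{1,n}$ is the star with one centre vertex adjacent to $n$ leaves. *)

(* Defs.v *)
From mathcomp Require Import all_boot.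
From Stdlib Require List.
Set Implicit Arguments. Unset Strict Implicit. Unset Printing Implicit Defensive.

Inductive game : Type := Game : seq game -> seq game -> game.

Definition leftopts (G : game) : seq game := let: Game L _ := G in L.
Definition rightopts (G : game) : seq game := let: Game _ R := G in R.

(* Conway's order: G <= H iff no G^L >= H and no H^R <= G.
   Written positively via the "less or fuzzy" relation  G <| H  (i.e. not H <= G):
     G <= H  iff  every G^L <| H  and  G <| every H^R
     G <| H  iff  G <= some H^L  or  some G^R <= H.
   For short (well-founded) games these mutually inductive relations are the
   unique solution of the recursive definition, i.e. the standard order. *)
Inductive game_le : game -> game -> Prop :=
| game_le_intro G H :
    (forall GL, List.In GL (leftopts G) -> game_lf GL H) ->
    (forall HR, List.In HR (rightopts H) -> game_lf G HR) ->
    game_le G H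
with game_lf : game -> game -> Prop :=
| game_lf_left G H HL : List.In HL (leftopts H) -> game_le G HL -> game_lf G H
| game_lf_right G H GR : List.In GR (rightopts G) -> game_le GR H -> game_lf G H.

Definition game_eq (G H : game) : Prop := game_le G H /\ game_le H G.

Fixpoint game_neg (G : game) : game :=
  match G with Game L R => Game (map game_neg R) (map game_neg L) end.

Fixpoint nat_game (n : nat) : game :=
  match n with 0 => Game [::] [::] | n'.+1 => Game [:: nat_game n'] [::] end.

Definition game_pm (G : game) : game := Game [:: G] [:: game_neg G].

(* A position on the graph (T, e) (e symmetric, irreflexive): the set A of
   remaining vertices, the set B of blue-tinted and the set R of red-tinted
   vertices (only tints of vertices in A matter).  The graph is the subgraph
   induced by A. *)
Section Snort.
Variables (T : finType) (e : rel T).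

Definition snort_nbhd (A : {set T}) (v : T) : {set T} := [set u in A | e v u].

(* Left plays v: delete v, tint its neighbours blue; red-tinted neighbours
   become doubly tinted and are deleted. *)
Definition snortL_A (A R : {set T}) (v : T) : {set T} :=
  (A :\ v) :\: (snort_nbhd A v :&: R).
Definition snortL_B (A B : {set T}) (v : T) : {set T} := B :|: snort_nbhd A v.
Definition snortR_A (A B : {set T}) (v : T) : {set T} :=
  (A :\ v) :\: (snort_nbhd A v :&: B).
Definition snortR_R (A R : {set T}) (v : T) : {set T} := R :|: snort_nbhd A v.

(* fuel k >= #|A| ; each move removes at least one vertex *)
Fixpoint snort_fuel (k : nat) (A B R : {set T}) : game :=
  match k with
  | 0 => Game [::] [::]
  | k'.+1 =>
      Game [seq snort_fuel k' (snortL_A A R v) (snortL_B A B v) R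
           | v <- enum A & v \notin R]
           [seq snort_fuel k' (snortR_A A B v) B (snortR_R A R v)
           | v <- enum A & v \notin B]
  end.

Definition snort (A B R : {set T}) : game := snort_fuel #|A| A B R.
End Snort.

(* the star K_{1,n}: vertex 0 is the centre, vertices 1..n are the leaves *)
Definition star_rel (n : nat) : rel 'I_n.+1 :=
  fun i j => (i == ord0) != (j == ord0).
Arguments star_rel n : clear implicits.

(* Main.v *)
Require Import Defs.
From mathcomp Require Import all_boot.
From Stdlib Require List.

Set Implicit Arguments. Unset Strict Implicit. Unset Printing Implicit Defensive.

Lemma In_mf (S X : Type) (f : S -> X) (p : pred S) (s : seq S) x :
  List.In x [seq f v | v <- s & p v] -> exists v, List.In v s /\ p v /\ x = f v.
Proof.
elim: s => [|a s IH] //=.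
case pa: (p a) => /=.
- case=> [<-|H]; first by exists a; auto.
  by have [v [H1 [H2 H3]]] := IH H; exists v; auto.
- move=> H; by have [v [H1 [H2 H3]]] := IH H; exists v; auto.
Qed.

Lemma mf_In (S X : Type) (f : S -> X) (p : pred S) (s : seq S) v :
  List.In v s -> p v -> List.In (f v) [seq f v | v <- s & p v].
Proof.
elim: s => [|a s IH] //= [->|H] pv.
- by rewrite pv /=; left.
- case: (p a) => /=; last exact: IH.
  by right; apply: IH.
Qed.

Lemma In_seq (T : eqType) (s : seq T) v : List.In v s <-> v \in s.
Proof.
elim: s => [|a s IH] //=.
rewrite in_cons; split.
- by case=> [->|/IH H]; [rewrite eqxx | rewrite H orbT].
- by case/orP=> [/eqP ->|/IH H]; [left|right].
Qed.

Lemma In_enum (T : finType) (A : {set T}) v : List.In v (enum A) <-> v \in A.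
Proof. by rewrite In_seq mem_enum. Qed.

Section L.
Variables (T : finType) (e : rel T).

Lemma card_rm (A X : {set T}) v : v \in A -> #|(A :\ v) :\: X| <= #|A| - 1.
Proof.
move=> vA; apply: leq_trans (subset_leq_card (subsetDl _ _)) _.
by rewrite (cardsD1 v A) vA add1n subn1.
Qed.

Lemma L1 k : forall (A B R : {set T}) m, #|A| <= m ->
  game_le (snort_fuel e k A B R) (nat_game m).
Proof.
elim: k => [|k IH] A B R m hm.
- constructor => /=; first by [].
  by move=> HR; case: m hm => [|m] /=.
- constructor => /=.
  + move=> GL HIn; have [v [/In_enum vA [_ ->]]] := In_mf HIn.
    case: m hm => [|m] hm.
    * by move: hm; rewrite leqn0 => /eqP/cards0_eq A0; rewrite A0 inE in vA.
    * apply: (@game_lf_left _ _ (nat_game m)); first by left.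
      apply: IH; apply: leq_trans (card_rm _ vA) _.
      by rewrite leq_subLR add1n.
  + by move=> HR; case: m hm => [|m] /=.
Qed.

Lemma L2 k : forall (A B R : {set T}) m, #|A| <= m ->
  game_le (game_neg (nat_game m)) (snort_fuel e k A B R).
Proof.
elim: k => [|k IH] A B R m hm.
- constructor => /=; first by case: m hm => [|m].
  by [].
- constructor => /=.
  + by case: m hm => [|m].
  + move=> GR HIn; have [v [/In_enum vA [_ ->]]] := In_mf HIn.
    case: m hm => [|m] hm.
    * by move: hm; rewrite leqn0 => /eqP/cards0_eq A0; rewrite A0 inE in vA.
    * apply: (@game_lf_right _ _ (game_neg (nat_game m))); first by left.
      apply: IH; apply: leq_trans (card_rm _ vA) _.
      by rewrite leq_subLR add1n.
Qed.

Lemma L3 k : forall (A B R : {set T}), (forall x, x \in A -> x \in B) ->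
  (forall x, x \in A -> x \notin R) -> #|A| <= k ->
  game_le (nat_game #|A|) (snort_fuel e k A B R).
Proof.
elim: k => [|k IH] A B R hB hR hk.
- move: hk; rewrite leqn0 => /eqP ->; by constructor.
- constructor => /=.
  + case cA: #|A| => [|m] //= GL [<-|//].
    have: 0 < #|A| by rewrite cA.
    case/card_gt0P => v vA.
    apply: (@game_lf_left _ _ (snort_fuel e k (snortL_A e A R v) (snortL_B e A B v) R)).
    * by apply: mf_In; [apply/In_enum | apply: hR].
    * have eA : snortL_A e A R v = A :\ v.
        apply/setP => x; rewrite /snortL_A /snort_nbhd !inE.
        by case xA: (x \in A); rewrite ?andbF // (negbTE (hR _ xA)) !andbF.
      have cA' : #|snortL_A e A R v| = m.
        by rewrite eA; move: cA; rewrite (cardsD1 v A) vA add1n => -[].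
      rewrite -cA'; apply: IH.
      -- move=> x; rewrite eA !inE => /andP [_ xA]; by rewrite hB.
      -- move=> x; rewrite eA !inE => /andP [_ xA]; exact: hR.
      -- by rewrite cA'; rewrite cA in hk.
  + move=> GR HIn; have [v [/In_enum vA [vB _]]] := In_mf HIn.
    by rewrite hB in vB.
Qed.

Lemma L4 k : forall (A B R : {set T}), (forall x, x \in A -> x \in R) ->
  (forall x, x \in A -> x \notin B) -> #|A| <= k ->
  game_le (snort_fuel e k A B R) (game_neg (nat_game #|A|)).
Proof.
elim: k => [|k IH] A B R hB hR hk.
- move: hk; rewrite leqn0 => /eqP ->; by constructor.
- constructor => /=.
  + move=> GL HIn; have [v [/In_enum vA [vB _]]] := In_mf HIn.
    by rewrite hB in vB.
  + case cA: #|A| => [|m] //= GL [<-|//].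
    have: 0 < #|A| by rewrite cA.
    case/card_gt0P => v vA.
    apply: (@game_lf_right _ _ (snort_fuel e k (snortR_A e A B v) B (snortR_R e A R v))).
    * by apply: mf_In; [apply/In_enum | apply: hR].
    * have eA : snortR_A e A B v = A :\ v.
        apply/setP => x; rewrite /snortR_A /snort_nbhd !inE.
        by case xA: (x \in A); rewrite ?andbF // (negbTE (hR _ xA)) !andbF.
      have cA' : #|snortR_A e A B v| = m.
        by rewrite eA; move: cA; rewrite (cardsD1 v A) vA add1n => -[].
      rewrite -cA'; apply: IH.
      -- move=> x; rewrite eA !inE => /andP [_ xA]; by rewrite hB.
      -- move=> x; rewrite eA !inE => /andP [_ xA]; exact: hR.
      -- by rewrite cA'; rewrite cA in hk.
Qed.
End L.

Theorem lemma3 (n : nat) (hn : 1 <= n) :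
  game_eq (snort (star_rel n) [set: 'I_n.+1] set0 set0)
          (game_pm (nat_game n)).
Proof.
rewrite /snort /game_pm cardsT card_ord /=.
have cT : forall v : 'I_n.+1, #|[set: 'I_n.+1] :\ v| = n.
  by move=> v; have := cardsD1 v [set: 'I_n.+1]; rewrite in_setT cardsT card_ord add1n => -[].
have cR : forall (v : 'I_n.+1) X, #|([set: 'I_n.+1] :\ v) :\: X| <= n.
  by move=> v X; apply: leq_trans (subset_leq_card (subsetDl _ _)) _; rewrite cT.
set AR := snortR_A (star_rel n) [set: 'I_n.+1] set0 ord0.
have eAR : AR = [set: 'I_n.+1] :\ ord0.
  by apply/setP => x; rewrite /AR /snortR_A /snort_nbhd !inE andbF.
set AL := snortL_A (star_rel n) [set: 'I_n.+1] set0 ord0.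
have eAL : AL = [set: 'I_n.+1] :\ ord0.
  by apply/setP => x; rewrite /AL /snortL_A /snort_nbhd !inE andbF.
split.
- constructor => /=.
  + move=> GL HIn; have [v [_ [_ ->]]] := In_mf HIn.
    apply: (@game_lf_left _ _ (nat_game n)); first by left.
    by apply: L1; apply: cR.
  + move=> HR [<-|//].
    apply: (@game_lf_right _ _ (snort_fuel (star_rel n) n AR set0
             (snortR_R (star_rel n) [set: 'I_n.+1] set0 ord0))).
    * by apply: mf_In; [apply/In_enum; rewrite inE | rewrite inE].
    * have := (@L4 _ (star_rel n) n AR set0
                 (snortR_R (star_rel n) [set: 'I_n.+1] set0 ord0)).
      rewrite eAR cT; apply.
      -- by move=> x; rewrite /snortR_R /snort_nbhd !inE /star_rel eqxx /= andbT => ->.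
      -- by move=> x; rewrite !inE.
      -- by rewrite ?cT.
- constructor => /=.
  + move=> HL [<-|//].
    apply: (@game_lf_left _ _ (snort_fuel (star_rel n) n AL
             (snortL_B (star_rel n) [set: 'I_n.+1] set0 ord0) set0)).
    * by apply: mf_In; [apply/In_enum; rewrite inE | rewrite inE].
    * have := (@L3 _ (star_rel n) n AL
                 (snortL_B (star_rel n) [set: 'I_n.+1] set0 ord0) set0).
      rewrite eAL cT; apply.
      -- by move=> x; rewrite /snortL_B /snort_nbhd !inE /star_rel eqxx /= andbT => ->.
      -- by move=> x; rewrite !inE.
      -- by rewrite ?cT.
  + move=> GR HIn; have [v [_ [_ ->]]] := In_mf HIn.
    apply: (@game_lf_right _ _ (game_neg (nat_game n))); first by left.
    by apply: L2; apply: cR.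
Qed.
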